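(* Let $\mathcal L$ be a language satisfying RBC with growth constant $K$. Then there is $N$ such that for every $w\in\mathcal L$ with $|w|\ge N$ that has a valid step, the set of exit words for $w$ with its minimal valid step $q$ has at most $2K^2$ elements.
   Context: A language is a set $\mathcal L$ of nonempty finite words over a finite alphabet $\mathcal A$, containing $\mathcal A$, closed under subwords, every word extendable on both sides. $Ex^\ell(w)=\{a:aw\in\mathcal L\}$, $Ex^r(w)=\{b:wb\in\mathcal L\}$; left special if $|Ex^\ell(w)|\ge2$, right special if $|Ex^r(w)|\ge2$, bispecial if both; regular bispecial if there is exactly one $\hat a\in Ex^\ell(w)$ with $\hat aw$ right special and exactly one $\hat b\in Ex^r(w)$ with $w\hat b$ left special. RBC: for some $n_0$ every bispecial word of length $\ge n_0$ is regular bispecial. Under RBC, $p(n+1)-p(n)$ ($p(n)$ the number of length-$n$ words of $\mathcal L$) equals a constant $K$ for all large $n$: the growth constant. For $n\ge2$, $w\in\mathcal A^n$ and integer $1\le q\le n/2$ with $w_{[q+1,n]}=w_{[1,n-q]}$, $w^{q\ast r}$ is the word of length $n+(r-1)q$ with $(w^{q\ast r})_{[q(i-1)+1,q(i-1)+n]}=w$ for $1\le i\le r$; $q$ is valid for $w$ in $\mathcal L$ if moreover $w^{q\ast2}\in\mathcal L$; the minimal valid step is the least one. An exit word for $w$ with step $q$ is a word $z=pw^{q\ast r}s$, $r\ge1$, $1\le|p|,|s|\le q$, such that $z\in\mathcal L$; $pw^{q\ast r}$ is not a suffix of $w^{q\ast(r+1)}$ but $p_{[2,|p|]}w^{q\ast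 r}$ is; and $w^{q\ast r}s$ is not a prefix of $w^{q\ast(r+1)}$ but $w^{q\ast r}s_{[1,|s|-1]}$ is (with $p_{[2,1]}$, $s_{[1,0]}$ empty). *)

(* Defs.v *)
From mathcomp Require Import all_boot.
Set Implicit Arguments. Unset Strict Implicit. Unset Printing Implicit Defensive.

Section Lang.
Variable A : finType.
Variable L : seq A -> bool.

Definition is_language : Prop :=
  [/\ (forall w, L w -> w != [::]),
      (forall a : A, L [:: a]),
      (forall u v x, L (u ++ v ++ x) -> v != [::] -> L v),
      (forall w, L w -> exists a, L (a :: w)) &
      (forall w, L w -> exists b, L (rcons w b))].

Definition Exl (w : seq A) : {set A} := [set a | L (a :: w)].
Definition Exr (w : seq A) : {set A} := [set b | L (rcons w b)].

Definition left_special w := 1 < #|Exl w|.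
Definition right_special w := 1 < #|Exr w|.
Definition bispecial w := left_special w && right_special w.

Definition regular_bispecial w :=
  [&& bispecial w,
      #|[set a in Exl w | right_special (a :: w)]| == 1 &
      #|[set b in Exr w | left_special (rcons w b)]| == 1].

Definition RBC : Prop :=
  exists n0, forall w, L w -> n0 <= size w -> bispecial w -> regular_bispecial w.

Definition complexity (n : nat) : nat := #|[set t : n.-tuple A | L t]|.

Definition growth_constant (K : nat) : Prop :=
  exists n1, forall n, n1 <= n -> complexity n.+1 = complexity n + K.

(* w^{q*r}: for q-periodic w (drop q w = take (size w - q) w), this is the word
   of length |w| + (r-1) q all of whose windows at positions q(i-1), 1<=i<=r,
   equal w; it is obtained by appending r-1 copies of the last q letters. *)
Definition qpow (w : seq A) (q r : nat) : seq A :=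
  w ++ flatten (nseq r.-1 (drop (size w - q) w)).

Definition valid_step (w : seq A) (q : nat) : Prop :=
  [/\ 2 <= size w, 1 <= q, q * 2 <= size w,
      drop q w = take (size w - q) w & L (qpow w q 2)].

Definition min_valid_step w q : Prop :=
  valid_step w q /\ forall q', valid_step w q' -> q <= q'.

Definition exit_word (w : seq A) (q : nat) (z : seq A) : Prop :=
  exists (p s : seq A) (r : nat),
    [/\ 1 <= r, 1 <= size p <= q, 1 <= size s <= q,
        z = p ++ qpow w q r ++ s & L z] /\
    [/\ ~~ suffix (p ++ qpow w q r) (qpow w q r.+1),
        suffix (behead p ++ qpow w q r) (qpow w q r.+1),
        ~~ prefix (qpow w q r ++ s) (qpow w q r.+1) &
        prefix (qpow w q r ++ take (size s).-1 s) (qpow w q r.+1)].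

End Lang.

(* Main.v *)
Require Import Defs.
From mathcomp Require Import all_boot zify.
Set Implicit Arguments. Unset Strict Implicit. Unset Printing Implicit Defensive.

Section Win.
Variables (A : finType) (x0 : A) (w : seq A) (q : nat).
Definition P k := nth x0 w (k %% q).
Definition win s l := mkseq (fun k => P (s+k)) l.

Lemma size_win s l : size (win s l) = l.
Proof. by rewrite size_mkseq. Qed.

Lemma nth_win s l k : k < l -> nth x0 (win s l) k = P (s+k).
Proof. by move=> kl; rewrite nth_mkseq. Qed.

Lemma win_cat s i j : win s (i + j) = win s i ++ win (s+i) j.
Proof.
apply: (@eq_from_nth _ x0); rewrite ?size_cat ?size_win // => k kl.
rewrite nth_win // nth_cat size_win; case: ifP => ki; rewrite nth_win //; last by lia.
by congr P; lia.
Qed.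

Lemma win_ext s1 s2 l : (forall k, k < l -> P (s1 + k) = P (s2 + k)) -> win s1 l = win s2 l.
Proof.
move=> H; apply: (@eq_from_nth _ x0); rewrite ?size_win // => k kl.
by rewrite !nth_win // H.
Qed.

Lemma P_mod a b : a = b %[mod q] -> P a = P b.
Proof. by rewrite /P => ->. Qed.

Lemma win_mod s1 s2 l : s1 = s2 %[mod q] -> win s1 l = win s2 l.
Proof. move=> H; apply: win_ext => k _; apply: P_mod; by rewrite -modnDml H modnDml. Qed.

Lemma take_win s l i : i <= l -> take i (win s l) = win s i.
Proof. by move=> il; rewrite -(subnKC il) win_cat take_size_cat ?size_win. Qed.

Lemma drop_win s l i : i <= l -> drop i (win s l) = win (s + i) (l - i).
Proof. by move=> il; rewrite -{1}(subnKC il) win_cat drop_size_cat ?size_win. Qed.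

Lemma P_shiftq k : P (k + q) = P k.
Proof. by apply: P_mod; rewrite modnDr. Qed.

Lemma w_win : 0 < q -> q <= size w -> drop q w = take (size w - q) w ->
  w = win 0 (size w).
Proof.
move=> q0 qn Hp; apply: (@eq_from_nth _ x0); rewrite ?size_win // => k.
move=> kn; rewrite nth_win //= /P add0n; move: kn.
elim/ltn_ind: k => k IH kn.
case: (ltnP k q) => kq; first by rewrite modn_small.
have E : k = q + (k - q) by rewrite subnKC.
rewrite {1}E -nth_drop Hp nth_take; last by lia.
rewrite IH; try lia.
by rewrite {2}E modnDl.
Qed.

Lemma flatten_nseqS (T : Type) k (d : seq T) :
  flatten (nseq k.+1 d) = flatten (nseq k d) ++ d.
Proof. by rewrite -addn1 nseqD flatten_cat /= cats0. Qed.

Lemma qpow_win r : 0 < q -> q <= size w -> w = win 0 (size w) ->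
  qpow w q r = win 0 (size w + r.-1 * q).
Proof.
move=> q0 qn Ew; rewrite /qpow; elim: r.-1 => [|k IH].
  by rewrite /= cats0 addn0 -Ew.
rewrite flatten_nseqS catA IH mulSn (addnC q) addnA [in RHS]win_cat; congr (_ ++ _).
rewrite [X in drop _ X]Ew drop_win ?leq_subr // subKn // add0n; apply: win_mod.
by rewrite add0n -{2}(subnK qn) -addnA -mulSn addnC modnMDl.
Qed.

Lemma win_cons s l : win s l.+1 = P s :: win s.+1 l.
Proof. by rewrite -add1n win_cat /win /mkseq /= addn0 addn1. Qed.

Lemma win_rcons s l : win s l.+1 = win s l ++ [:: P (s + l)].
Proof. by rewrite -addn1 win_cat /win /mkseq /= addn0. Qed.

End Win.

Section Exit.
Variables (A : finType) (L : seq A -> bool) (x0 : A) (w : seq A) (q : nat).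
Hypotheses (q0 : 0 < q) (qn : q * 2 <= size w) (Ew : w = win x0 w q 0 (size w)).
Notation P := (P x0 w q).
Notation win := (win x0 w q).

Lemma exit_abstract z : exit_word L w q z ->
  exists a b s l, [/\ z = a :: win s l ++ [:: b], 0 < s <= q, size w <= l,
     (a != P (s.-1)) && (b != P (s + l)) & L z].
Proof.
have qn' : q <= size w by lia.
case=> p [s] [r] [[r1 /andP[p1 pq] /andP[s1 sq] -> Lz] [nsufp sufp npres pres]].
rewrite !(@qpow_win _ x0) // in nsufp sufp npres pres Lz *.
case: p p1 pq nsufp sufp Lz => [//|a p'] _ /= pq nsufp sufp Lz.
case/lastP: s s1 sq npres pres Lz => [//|s' b] _; rewrite size_rcons /= => sq npres pres Lz.
rewrite -cats1 take_size_cat // in pres.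
set lu := size w + r.-1 * q in nsufp sufp npres pres *.
have EU : size w + r * q = lu + q by rewrite /lu -{1}(prednK r1) mulSn; lia.
rewrite EU in nsufp sufp npres pres.
set s0 := q - size p'.
have s0pos : 0 < s0 by rewrite /s0; lia.
move: sufp; rewrite suffixE size_win size_cat size_win.
have -> : lu + q - (size p' + lu) = s0 by rewrite /s0; lia.
rewrite drop_win; last by lia.
rewrite add0n => /eqP Esuf.
have hs : lu + size s' <= lu + q by lia.
move: pres; rewrite prefixE size_cat size_win take_win //.
move=> /eqP Epre.
have Ep' : p' = win s0 (size p').
  have := congr1 (take (size p')) Esuf; rewrite take_size_cat // take_win //; lia.
exists a, b, s0, (size p' + lu + size s'); split => //.
  rewrite -cats1 -addnA win_cat -Ep' -!catA; congr (_ :: (_ ++ _)).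
  rewrite catA -Epre; congr (_ ++ _); apply: win_mod.
  rewrite /s0 subnK; last by lia.
  by rewrite modnn mod0n.
- by apply/andP; split => //; rewrite /s0; lia.
- rewrite /lu; nia.
- apply/andP; split.
 apply: contra nsufp => /eqP Ea; rewrite suffixE size_win /= size_cat size_win.
  have -> : lu + q - (size p' + lu).+1 = s0.-1 by rewrite /s0; lia.
  rewrite drop_win; last by lia.
  have -> : lu + q - s0.-1 = (size p' + lu).+1 by rewrite /s0; lia.
  rewrite add0n win_cons prednK // Ea -Esuf.
  suff -> : lu + q - s0 = size p' + lu by [].
  rewrite /s0; lia.
  apply: contra npres => /eqP Eb; rewrite prefixE size_cat size_win size_rcons.
  have hs2 : lu + (size s').+1 <= lu + q by lia.
  rewrite take_win // addnS win_rcons Epre add0n Eb -cats1 -catA.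
  apply/eqP; congr (_ ++ (_ ++ [:: _])).
  apply: P_mod; rewrite /s0.
  have -> : q - size p' + (size p' + lu + size s') = q + (lu + size s') by lia.
  by rewrite modnDl.
Qed.

End Exit.

Lemma factor_prefix (A : finType) (L : seq A -> bool) s t :
  is_language L -> L (s ++ t) -> s != [::] -> L s.
Proof. by case=> _ _ H _ _ Lst sn; apply: (H [::] s t) => //. Qed.

Lemma factor_mid (A : finType) (L : seq A -> bool) u v x :
  is_language L -> L (u ++ v ++ x) -> v != [::] -> L v.
Proof. by case=> _ _ H _ _; apply: H. Qed.

Section Shift.
Variables (A : finType) (L : seq A -> bool) (x0 : A) (w : seq A) (q : nat).
Hypotheses (HL : is_language L) (Hmin : min_valid_step L w q).
Notation P := (P x0 w q).
Notation win := (win x0 w q).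

Lemma mvs_facts : [/\ 0 < q, q * 2 <= size w, w = win 0 (size w) &
   L (win 0 (size w + q))].
Proof.
case: Hmin => [[n2 q1 q2 Hd Lq]] _.
have Ew : w = win 0 (size w) by apply: w_win => //; lia.
have qn : q <= size w by lia.
split => //; rewrite (@qpow_win _ x0) // in Lq. by rewrite /= mul1n in Lq.
Qed.

Lemma period_shift d : (forall k, P (k + d) = P k) -> d %% q = 0.
Proof.
move=> Hd; have [q0 qn Ew Lq] := mvs_facts.
case: Hmin => [[n2 _ _ _ _]] Hm.
set rho := d %% q.
have rq : rho < q by rewrite ltn_pmod.
have Hr : forall k, P (k + rho) = P k.
  move=> k; rewrite -[in RHS](Hd k); apply: P_mod.
  by rewrite /rho modnDmr.
case: (posnP rho) => // rpos.
suff : valid_step L w rho by move/Hm; lia.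
split => //; first by lia.
- rewrite Ew drop_win ?size_win; last by lia.
  rewrite take_win; last by lia.
  by apply: win_ext => k _; rewrite add0n addnC Hr.
- rewrite /qpow /= cats0.
  have -> : drop (size w - rho) w = win (size w) rho.
    rewrite [X in drop _ X]Ew drop_win; last by lia.
    have -> : size w - (size w - rho) = rho by lia.
    apply: win_ext => k _; rewrite add0n -Hr; congr P; lia.
  rewrite [X in X ++ _]Ew -[X in win X rho](add0n (size w)) -win_cat.
  move: Lq; rewrite -(subnKC (_ : size w + rho <= size w + q)); last by lia.
  rewrite win_cat => Lq; apply: factor_prefix HL Lq _.
  by rewrite -size_eq0 size_win; lia.
Qed.

Lemma shift_win x y m : x <= y -> q <= m -> win x m = win y m -> (y - x) %% q = 0.
Proof.
move=> xy qm E; have [q0 qn Ew Lq] := mvs_facts.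
apply: period_shift => k.
set j := (k + (q - x %% q)) %% q.
have jq : j < q by rewrite ltn_pmod.
have Hj : (x + j) %% q = k %% q.
  rewrite /j modnDmr.
  have xl : x %% q < q by rewrite ltn_pmod.
  have -> : x + (k + (q - x %% q)) = k + (x %/ q).+1 * q.
    rewrite mulSn {1}(divn_eq x q); lia.
  by rewrite addnC modnMDl.
have E2 : P (x + j) = P (y + j).
  by have := congr1 (fun s => nth x0 s j) E; rewrite /= !nth_win //; lia.
have -> : P k = P (x + j) by apply: P_mod; rewrite Hj.
rewrite E2; apply: P_mod.
have -> : y + j = (x + j) + (y - x) by lia.
by rewrite -modnDml -Hj modnDml.
Qed.

End Shift.

Lemma card2_le (A : finType) (S : {set A}) a c : a != c -> a \in S -> c \in S -> 1 < #|S|.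
Proof.
move=> ac aS cS; have : [set a; c] \subset S by apply/subsetP => x; rewrite !inE => /orP[]/eqP->.
by move/subset_leq_card; rewrite cards2 ac.
Qed.

Lemma rbc_core (A : finType) (L : seq A -> bool) n0 t a b c d :
  is_language L ->
  (forall w, L w -> n0 <= size w -> bispecial L w -> regular_bispecial L w) ->
  n0 <= size t -> 0 < size t -> a != c -> b != d ->
  L (a :: rcons t b) -> L (a :: rcons t d) -> L (c :: rcons t b) -> L (c :: rcons t d) ->
  False.
Proof.
move=> HL HR nt t0 ac bd L1 L2 L3 L4.
have Pre : forall x y, L (x :: rcons t y) -> L (x :: t).
  by move=> x y; rewrite -cats1 -cat_cons => H; apply: factor_prefix HL H _.
have Suf : forall x y, L (x :: rcons t y) -> L (rcons t y).
  move=> x y H; apply: (factor_mid (u := [:: x]) (x := [::]) HL); first by rewrite cats0.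
  by rewrite -size_eq0 size_rcons.
have Lt : L t.
  have := Pre _ _ L1; rewrite -cat1s => H; apply: (factor_mid (u := [:: a]) (x := [::]) HL).
    by rewrite cats0.
  by rewrite -size_eq0 -lt0n.
have Ra : right_special L (a :: t).
  rewrite /right_special; apply: (card2_le bd); rewrite inE //.
have Rc : right_special L (c :: t).
  rewrite /right_special; apply: (card2_le bd); rewrite inE //.
have Bs : bispecial L t.
  apply/andP; split; rewrite /left_special /right_special.
    by apply: (card2_le ac); rewrite inE; apply: Pre; eassumption.
  apply: (card2_le bd); rewrite inE.
    by have := Suf _ _ L1.
  by have := Suf _ _ L2.
have := HR t Lt nt Bs; case/and3P => _ /eqP C _.
have : 1 < #|[set x in Exl L t | right_special L (x :: t)]|.
  by apply: (card2_le ac); rewrite !inE ?Ra ?Rc andbT; apply: Pre; eassumption.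
by rewrite C.
Qed.

Section Fiber.
Variables (A : finType) (L : seq A -> bool) (x0 : A) (w : seq A) (q n0 : nat).
Hypotheses (HL : is_language L) (Hmin : min_valid_step L w q)
  (HR : forall w, L w -> n0 <= size w -> bispecial L w -> regular_bispecial L w)
  (Hn0 : n0 <= size w).
Notation P := (P x0 w q).
Notation win := (win x0 w q).

Definition AE z s l a b := [/\ z = a :: win s l ++ [:: b], 0 < s <= q, size w <= l,
     (a != P (s.-1)) && (b != P (s + l)) & L z].

Lemma core3 z1 z3 s l1 l3 a b : AE z1 s l1 a b -> AE z3 s l3 a b ->
  l1 + q + 1 <= l3 -> (l3 - l1) %% q = 0 -> False.
Proof.
have [q0 qn Ew Lq] := mvs_facts x0 Hmin.
move=> [E1 /andP[s0 sq] nl1 /andP[na nb] L1] [E3 _ nl3 _ L3] hl hm.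
set t := win s l1.
have Et3 : win s l3 = win s l1 ++ [:: P (s + l1)] ++ win (s + l1.+1) (l3 - l1.+1).
  by rewrite catA -win_rcons -win_cat subnKC //; lia.
have Ep : P (s.-1) = P (s.-1 + q) by rewrite P_shiftq.
apply: (rbc_core (n0 := n0) (t := t) (a := a) (b := b) (c := P s.-1) (d := P (s + l1)) HL HR).
- by rewrite size_win; lia.
- by rewrite size_win; lia.
- exact: na.
- exact: nb.
- by rewrite /t -cats1 -E1.
- rewrite E3 Et3 -cat_cons catA in L3.
  rewrite /t -cats1; apply: (factor_prefix (t := win (s + l1.+1) (l3 - l1.+1) ++ [:: b]) HL) => //.
  by move: L3; rewrite /= -!catA.
- rewrite E3 in L3.
  have E : win s l3 = win s (l3 - l1.+1) ++ win (s + (l3 - l1.+1)) l1.+1.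
    by rewrite -win_cat subnK //; lia.
  rewrite E (@win_mod _ x0 w q (s + (l3 - l1.+1)) s.-1) in L3; last first.
    have -> : s + (l3 - l1.+1) = s.-1 + (l3 - l1) by lia.
    by rewrite -modnDmr hm addn0.
  rewrite win_cons prednK // in L3.
  apply: (factor_mid (u := a :: win s (l3 - l1.+1)) (x := [::]) HL) => //.
  by move: L3; rewrite /t -cats1 cats0 /= -!catA.
- rewrite E3 in L3.
  have E : win s l3 = win s q.-1 ++ win (s + q.-1) l1.+2 ++ win (s + q.-1 + l1.+2) (l3 - q.-1 - l1.+2).
    rewrite -!win_cat; congr (win _ _); lia.
  rewrite E (@win_mod _ x0 w q (s + q.-1) s.-1) in L3; last first.
    have -> : s + q.-1 = s.-1 + q by lia.
    by rewrite modnDr.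
  rewrite win_cons prednK // win_rcons in L3.
  apply: (factor_mid (u := a :: win s q.-1) (x := win (s + q.-1 + l1.+2) (l3 - q.-1 - l1.+2) ++ [:: b]) HL) => //.
  by move: L3; rewrite /t -cats1 /= -!catA /= -!catA.
Qed.

Definition keyL (z : seq A) := (take (size w) (behead z), head x0 z).
Definition keyR (z : seq A) := (take (size w) (drop (size z - (size w).+1) z), last x0 z).

Lemma keyL_AE z s l a b : AE z s l a b -> keyL z = (win s (size w), a).
Proof.
case=> -> _ nl _ _; rewrite /keyL /= take_cat size_win.
case: ltnP => h; first by rewrite take_win // ltnW.
have -> : size w = l by lia.
by rewrite subnn take0 cats0.
Qed.

Lemma keyR_AE z s l a b : AE z s l a b -> keyR z = (win (s + (l - size w)) (size w), b).
Proof.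
case=> -> _ nl _ _; rewrite /keyR /= size_cat size_win /= addn1.
have -> : l.+2 - (size w).+1 = (l - size w).+1 by lia.
rewrite /= drop_cat size_win.
case: ltnP => h.
  rewrite drop_win; last by lia.
  have -> : l - (l - size w) = size w by lia.
  by rewrite take_cat size_win ltnn subnn take0 cats0 last_cat.
have -> : size w = 0 by lia.
by rewrite take0 last_cat.
Qed.

Lemma AE_eq z1 z2 s l a b : AE z1 s l a b -> AE z2 s l a b -> z1 = z2.
Proof. by case=> -> _ _ _ _ [-> _ _ _ _]. Qed.

Lemma fiber_pair z1 z2 s1 s2 l1 l2 a1 a2 b1 b2 :
  AE z1 s1 l1 a1 b1 -> AE z2 s2 l2 a2 b2 -> keyL z1 = keyL z2 -> keyR z1 = keyR z2 ->
  l1 <= l2 -> [/\ s1 = s2, a1 = a2, b1 = b2 & (l2 - l1) %% q = 0].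
Proof.
have [q0 qn Ew Lq] := mvs_facts x0 Hmin.
move=> H1 H2; rewrite (keyL_AE H1) (keyL_AE H2) (keyR_AE H1) (keyR_AE H2).
case=> Ew1 ->; case=> Ew2 -> hl.
case: H1 => _ /andP[s10 s1q] n1 _ _; case: H2 => _ /andP[s20 s2q] n2 _ _.
have qw : q <= size w by lia.
have Es : s1 = s2.
  case: (leqP s1 s2) => h.
    have := shift_win HL Hmin h qw Ew1; rewrite modn_small; lia.
  have := shift_win HL Hmin (ltnW h) qw (esym Ew1); rewrite modn_small; lia.
subst s2; split => //.
have h : s1 + (l1 - size w) <= s1 + (l2 - size w) by lia.
have := shift_win HL Hmin h qw Ew2.
by have -> : s1 + (l2 - size w) - (s1 + (l1 - size w)) = l2 - l1 by lia.
Qed.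


Lemma pair_gap z1 z2 s1 s2 l1 l2 a1 a2 b1 b2 :
  AE z1 s1 l1 a1 b1 -> AE z2 s2 l2 a2 b2 -> keyL z1 = keyL z2 -> keyR z1 = keyR z2 ->
  z1 != z2 -> l1 <= l2 ->
  [/\ s1 = s2, a1 = a2, b1 = b2, l1 + q <= l2 & (l2 - l1) %% q = 0].
Proof.
have [q0 qn Ew Lq] := mvs_facts x0 Hmin.
move=> H1 H2 kl kr ne hl.
have [Es Ea Eb Em] := fiber_pair H1 H2 kl kr hl.
subst s2 a2 b2; split => //.
case: (ltngtP l1 l2) hl => // h _; last by subst l2; by rewrite (AE_eq H1 H2) eqxx in ne.
have : q %| l2 - l1 by apply/eqP.
move/dvdn_leq; lia.
Qed.

Lemma fiber3_sorted z1 z2 z3 s1 s2 s3 l1 l2 l3 a1 a2 a3 b1 b2 b3 kL kR :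
  AE z1 s1 l1 a1 b1 -> AE z2 s2 l2 a2 b2 -> AE z3 s3 l3 a3 b3 ->
  keyL z1 = kL -> keyL z2 = kL -> keyL z3 = kL ->
  keyR z1 = kR -> keyR z2 = kR -> keyR z3 = kR ->
  z1 != z2 -> z2 != z3 -> z1 != z3 -> l1 <= l2 -> l2 <= l3 -> False.
Proof.
have [q0 qn Ew Lq] := mvs_facts x0 Hmin.
move=> H1 H2 H3 k1 k2 k3 r1 r2 r3 n12 n23 n13 h12 h23.
have [_ _ _ g12 _] := pair_gap H1 H2 (etrans k1 (esym k2)) (etrans r1 (esym r2)) n12 h12.
have [_ _ _ g23 _] := pair_gap H2 H3 (etrans k2 (esym k3)) (etrans r2 (esym r3)) n23 h23.
have [Es Ea Eb g13 m13] := pair_gap H1 H3 (etrans k1 (esym k3)) (etrans r1 (esym r3)) n13 (leq_trans h12 h23).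
subst s3 a3 b3.
apply: (core3 H1 H3) => //; lia.
Qed.

End Fiber.

Lemma card_pairset (T1 T2 : finType) (Q : T1 -> T2 -> bool) :
  #|[set p : T1 * T2 | Q p.1 p.2]| = \sum_(y : T1) #|[set a | Q y a]|.
Proof.
rewrite -(sum1dep_card (fun p : T1 * T2 => Q p.1 p.2)).
rewrite (eq_bigr (fun y => \sum_(a | Q y a) 1)); last first.
  by move=> y _; rewrite (sum1dep_card (fun a => Q y a)).
by rewrite (pair_big_dep xpredT (fun y a => Q y a) (fun _ _ => 1)).
Qed.

Section Count.
Variables (A : finType) (L : seq A -> bool) (ext : seq A -> A -> seq A) (n K : nat).
Variable (t0 : n.+1.-tuple A).
Hypotheses (Hsz : forall y a, size (ext y a) = (size y).+1)
  (Hinj : forall y a y' a', size y = size y' -> ext y a = ext y' a' -> y = y' /\ a = a')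
  (Hsurj : forall t : seq A, size t = n.+1 -> exists y a, t = ext y a)
  (n0 : 0 < n) (Hfac : forall y a, y != [::] -> L (ext y a) -> L y)
  (Hex : forall y, L y -> exists a, L (ext y a))
  (Hgr : complexity L n.+1 = complexity L n + K).

Lemma compl_ext : complexity L n.+1 = \sum_(y : n.-tuple A) #|[set a | L (ext y a)]|.
Proof.
rewrite -card_pairset /complexity.
set S := [set p : n.-tuple A * A | _].
pose f (p : n.-tuple A * A) : n.+1.-tuple A := insubd t0 (ext p.1 p.2).
have fE p : val (f p) = ext p.1 p.2 by rewrite val_insubd Hsz size_tuple eqxx.
have -> : [set t : n.+1.-tuple A | L t] = f @: S.
  apply/setP => t; rewrite inE; apply/idP/imsetP.
    move=> Lt; have [y [a Et]] := Hsurj (size_tuple t).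
    have sy : size y == n by move: (size_tuple t); rewrite Et Hsz => -[->].
    exists (Tuple sy, a); first by rewrite inE /= -Et.
    by apply: val_inj; rewrite fE /= -Et.
  by case=> p; rewrite inE => Lp ->; rewrite fE.
rewrite card_in_imset // => p p' _ _ /(congr1 val); rewrite !fE.
case: p p' => y a [y' a'] /= /Hinj[]; first by rewrite !size_tuple.
by move=> /val_inj -> ->.
Qed.

Lemma sum_ext_K : \sum_(y : n.-tuple A | L y) (#|[set a | L (ext y a)]| - 1) = K.
Proof.
have H1 : complexity L n = \sum_(y : n.-tuple A | L y) 1 by rewrite sum1dep_card.
have H2 : complexity L n.+1 = \sum_(y : n.-tuple A | L y) #|[set a | L (ext y a)]|.
  rewrite compl_ext (bigID (fun y : n.-tuple A => L y)) /= addnC big1 ?add0n //.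
  move=> y /negbTE Ly; apply/eqP; rewrite cards_eq0; apply/eqP/setP => a.
  by rewrite !inE; apply/negbTE; apply: contraFN Ly; apply: Hfac; rewrite -size_eq0 size_tuple -lt0n.
have H3 : \sum_(y : n.-tuple A | L y) #|[set a | L (ext y a)]| =
   \sum_(y : n.-tuple A | L y) (#|[set a | L (ext y a)]| - 1) + \sum_(y : n.-tuple A | L y) 1.
  rewrite -big_split /=; apply: eq_bigr => y Ly; rewrite subnK // card_gt0.
  have [a La] := Hex Ly; apply/set0Pn; exists a; by rewrite inE.
move: Hgr; rewrite H2 H1 H3; lia.
Qed.

Lemma key_card (c : seq A -> A) :
  #|[set p : n.-tuple A * A | [&& L p.1, L (ext p.1 p.2), L (ext p.1 (c p.1)) & p.2 != c p.1]]| <= K.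
Proof.
rewrite (card_pairset (fun (y : n.-tuple A) (a : A) => [&& L y, L (ext y a), L (ext y (c y)) & a != c y])).
rewrite -sum_ext_K (bigID (fun y : n.-tuple A => L y)) /= [X in _ + X]big1 ?addn0; last first.
  move=> y /negbTE Ly; apply/eqP; rewrite cards_eq0; apply/eqP/setP => a; by rewrite !inE Ly.
apply: leq_sum => y Ly.
case Lc: (L (ext y (c y))); last first.
  have -> : [set a | L y & [&& L (ext y a), false & a != c y]] = set0.
    by apply/setP => a; rewrite !inE !andbF.
  by rewrite cards0.
have -> : [set a | L y & [&& L (ext y a), true & a != c y]] = [set a | L (ext y a)] :\ c y.
  by apply/setP => a; rewrite !inE Ly /=; case: (L (ext y a)); case: (a != c y).
by rewrite [X in _ <= X - 1](cardsD1 (c y)) inE Lc /= add1n subn1.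
Qed.

End Count.

Lemma size_le_fibers (T U : eqType) (f : T -> U) m (s : seq T) :
  (forall k, count (fun z => f z == k) s <= m) -> size s <= m * size (undup (map f s)).
Proof.
have [N sN] := ubnP (size s); elim: N s sN => // N IHN s sN Hc.
case: s sN Hc => [|x s'] // sN Hc.
have IH : forall s1, size s1 < size (x :: s') -> (forall k, count (fun z => f z == k) s1 <= m) ->
  size s1 <= m * size (undup (map f s1)).
  move=> s1 h; apply: IHN; lia.
set k := f x.
set s1 := filter (fun z => f z != k) (x :: s').
have Hs : size (x :: s') = count (fun z => f z == k) (x :: s') + size s1.
  by rewrite size_filter -(count_predC (fun z => f z == k)).
have Hlt : size s1 < size (x :: s').
  rewrite size_filter /= /k eqxx /= add0n ltnS; exact: count_size.
have IH1 := IH s1 Hlt.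
have IH2 : size s1 <= m * size (undup (map f s1)).
  apply: IH1 => k'; apply: leq_trans (Hc k').
  rewrite /s1 count_filter; apply: sub_count => z /andP[]; by [].
have Hu : size (k :: undup (map f s1)) <= size (undup (map f (x :: s'))).
  apply: uniq_leq_size.
    rewrite /= undup_uniq andbT mem_undup; apply/mapP => -[z].
    by rewrite mem_filter => /andP[/negP nz _] ez; apply: nz; rewrite ez.
  move=> u; rewrite inE mem_undup => /orP[/eqP ->|]; first by rewrite mem_undup map_f // mem_head.
  rewrite mem_undup => /mapP[z]; rewrite mem_filter => /andP[_ zs] ->.
  by rewrite map_f.
rewrite Hs; move: (Hc k) Hu => /= ck Hu.
apply: leq_trans (leq_add ck IH2) _.
rewrite -mulnS; apply: leq_mul => //.
Qed.

Lemma three_of_count (T : eqType) (p : pred T) (s : seq T) :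
  uniq s -> 2 < count p s ->
  exists z1 z2 z3, [/\ z1 \in s, z2 \in s, z3 \in s, [&& p z1, p z2 & p z3] &
     [&& z1 != z2, z2 != z3 & z1 != z3]].
Proof.
move=> us; rewrite -size_filter => h.
have uf : uniq (filter p s) by apply: filter_uniq.
case E: (filter p s) h uf => [|z1 [|z2 [|z3 t]]] //= _.
have mem z : z \in filter p s -> z \in s /\ p z by rewrite mem_filter => /andP[].
rewrite E in mem.
case/andP; rewrite !inE !negb_or => /and3P[n12 n13 _] /andP[/andP[n23 _] _].
have [i1 p1] := mem z1 (mem_head _ _).
have [i2 p2] : z2 \in s /\ p z2 by apply: mem; rewrite !inE eqxx orbT.
have [i3 p3] : z3 \in s /\ p z3 by apply: mem; rewrite !inE eqxx !orbT.
by exists z1, z2, z3; rewrite p1 p2 p3 n12 n23 n13.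
Qed.


Section Final.
Variables (A : finType) (L : seq A -> bool) (x0 : A) (w : seq A) (q n0 K : nat).
Hypotheses (HL : is_language L) (Hmin : min_valid_step L w q)
  (HR : forall w, L w -> n0 <= size w -> bispecial L w -> regular_bispecial L w)
  (Hn0 : n0 <= size w)
  (Hgr : complexity L (size w).+1 = complexity L (size w) + K).
Notation P := (P x0 w q).
Notation win := (win x0 w q).
Notation AE := (AE L x0 w q).

Lemma winL x m : 0 < m -> x %% q + m <= size w + q -> L (win x m).
Proof.
have [q0 qn Ew Lq] := mvs_facts x0 Hmin.
move=> m0 hm; rewrite (@win_mod _ x0 w q x (x %% q)); last by rewrite modn_mod.
move: Lq; rewrite -(subnKC hm) win_cat -(subnKC (leq_addr m (x %% q))) win_cat add0n.
rewrite addKn -catA => H; apply: factor_mid HL H _.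
by rewrite -size_eq0 size_win -lt0n.
Qed.

Lemma exit_AE z : exit_word L w q z -> exists s l a b, AE z s l a b.
Proof.
have [q0 qn Ew Lq] := mvs_facts x0 Hmin.
move=> /(exit_abstract q0 qn Ew) [a [b [s [l [E1 E2 E3 E4 E5]]]]].
by exists s, l, a, b.
Qed.

Lemma fiber_count zs : uniq zs -> (forall z, z \in zs -> exit_word L w q z) ->
  forall k, count (fun z => (keyL x0 w z, keyR x0 w z) == k) zs <= 2.
Proof.
move=> uz Hz k; rewrite leqNgt; apply/negP => /(three_of_count uz).
move=> [z1 [z2 [z3 [i1 i2 i3 /and3P[/eqP e1 /eqP e2 /eqP e3] /and3P[n12 n23 n13]]]]].
have [s1 [l1 [a1 [b1 H1]]]] := exit_AE (Hz _ i1).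
have [s2 [l2 [a2 [b2 H2]]]] := exit_AE (Hz _ i2).
have [s3 [l3 [a3 [b3 H3]]]] := exit_AE (Hz _ i3).
have kl1 : keyL x0 w z1 = k.1 by rewrite -e1.
have kl2 : keyL x0 w z2 = k.1 by rewrite -e2.
have kl3 : keyL x0 w z3 = k.1 by rewrite -e3.
have kr1 : keyR x0 w z1 = k.2 by rewrite -e1.
have kr2 : keyR x0 w z2 = k.2 by rewrite -e2.
have kr3 : keyR x0 w z3 = k.2 by rewrite -e3.
have F := @fiber3_sorted _ _ x0 _ _ _ HL Hmin HR Hn0.
have n21 : z2 != z1 by rewrite eq_sym.
have n32 : z3 != z2 by rewrite eq_sym.
have n31 : z3 != z1 by rewrite eq_sym.
have [h12|h12] := leqP l1 l2.
  have [h23|h23] := leqP l2 l3; first exact: (F _ _ _ _ _ _ _ _ _ _ _ _ _ _ _ _ _ H1 H2 H3 kl1 kl2 kl3 kr1 kr2 kr3 n12 n23 n13 h12 h23).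
  have [h13|h13] := leqP l1 l3; first exact: (F _ _ _ _ _ _ _ _ _ _ _ _ _ _ _ _ _ H1 H3 H2 kl1 kl3 kl2 kr1 kr3 kr2 n13 n32 n12 h13 (ltnW h23)).
  exact: (F _ _ _ _ _ _ _ _ _ _ _ _ _ _ _ _ _ H3 H1 H2 kl3 kl1 kl2 kr3 kr1 kr2 n31 n12 n32 (ltnW h13) h12).
have [h13|h13] := leqP l1 l3; first exact: (F _ _ _ _ _ _ _ _ _ _ _ _ _ _ _ _ _ H2 H1 H3 kl2 kl1 kl3 kr2 kr1 kr3 n21 n13 n23 (ltnW h12) h13).
have [h23|h23] := leqP l2 l3; first exact: (F _ _ _ _ _ _ _ _ _ _ _ _ _ _ _ _ _ H2 H3 H1 kl2 kl3 kl1 kr2 kr3 kr1 n23 n31 n21 h23 (ltnW h13)).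
exact: (F _ _ _ _ _ _ _ _ _ _ _ _ _ _ _ _ _ H3 H2 H1 kl3 kl2 kl1 kr3 kr2 kr1 n32 n21 n31 (ltnW h23) (ltnW h12)).
Qed.

Lemma AE_facts z s l a b : AE z s l a b ->
  [/\ L (a :: win s (size w)), L (P s.-1 :: win s (size w)),
      L (rcons (win (s + (l - size w)) (size w)) b),
      L (rcons (win (s + (l - size w)) (size w)) (P (s + l))) &
      [/\ nth x0 (win s (size w)) q.-1 = P s.-1,
          nth x0 (win (s + (l - size w)) (size w)) (size w - q) = P (s + l),
          a != P s.-1 & b != P (s + l)]].
Proof.
have [q0 qn Ew Lq] := mvs_facts x0 Hmin.
case=> Ez /andP[s0 sq] nl /andP[na nb] Lz.
have E2 : win s l = win s (l - size w) ++ win (s + (l - size w)) (size w).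
  by rewrite -win_cat subnK.
split.
- have E1 : win s l = win s (size w) ++ win (s + size w) (l - size w) by rewrite -win_cat subnKC.
  rewrite Ez E1 in Lz; apply: (factor_prefix (t := win (s + size w) (l - size w) ++ [:: b]) HL) => //.
  by move: Lz; rewrite /= -catA.
- rewrite -[X in win X _](prednK s0) -win_cons; apply: winL => //.
  rewrite modn_small; lia.
- rewrite Ez E2 in Lz; apply: (factor_mid (u := a :: win s (l - size w)) (x := [::]) HL).
    by move: Lz; rewrite cats0 -cats1 /= -catA.
  by rewrite -size_eq0 size_rcons.
- have -> : P (s + l) = P (s + (l - size w) + size w) by congr P; lia.
  rewrite -cats1 -win_rcons; apply: winL => //.
  have : (s + (l - size w)) %% q < q by rewrite ltn_pmod.
  lia.
split => //.
- rewrite nth_win; last by lia.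
  apply: P_mod; have -> : s + q.-1 = s.-1 + q by lia.
  by rewrite modnDr.
- rewrite nth_win; last by lia.
  apply: P_mod; have -> : s + l = s + (l - size w) + (size w - q) + q by lia.
  by rewrite modnDr.
Qed.

Lemma keysL_bound zs : (forall z, z \in zs -> exit_word L w q z) ->
  size (undup (map (keyL x0 w) zs)) <= K.
Proof.
have [q0 qn Ew Lq] := mvs_facts x0 Hmin.
move=> Hz.
have n0' : 0 < size w by lia.
have Hinj : forall (y : seq A) a y' a', size y = size y' -> a :: y = a' :: y' -> y = y' /\ a = a'.
  by move=> y a y' a' _ [-> ->].
have Hsurj : forall t : seq A, size t = (size w).+1 -> exists y a, t = a :: y.
  by case=> // a y _; exists y, a.
have Hfac : forall (y : seq A) a, y != [::] -> L (a :: y) -> L y.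
  move=> y a yn La; apply: (factor_mid (u := [:: a]) (x := [::]) HL) => //.
  by rewrite cats0.
have Hex : forall y, L y -> exists a, L (a :: y) by case: HL => _ _ _ H _.
have KC := @key_card A L (fun y a => a :: y) (size w) K (nseq_tuple (size w).+1 x0)
  (fun _ _ => erefl) Hinj Hsurj n0' Hfac Hex Hgr (fun y => nth x0 y q.-1).
apply: leq_trans KC.
pose g (p : seq A * A) : (size w).-tuple A * A := (insubd (nseq_tuple (size w) x0) p.1, p.2).
have Hm : forall p, p \in undup (map (keyL x0 w) zs) ->
    exists s l a b z, [/\ p = (win s (size w), a), AE z s l a b & z \in zs].
  move=> p; rewrite mem_undup => /mapP[z zin ->].
  have [s [l [a [b H]]]] := exit_AE (Hz _ zin).
  by exists s, l, a, b, z; rewrite (keyL_AE Hn0 H).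
rewrite -(size_map g) cardE; apply: uniq_leq_size.
  rewrite map_inj_in_uniq ?undup_uniq // => p p' /Hm[s [l [a [b [z [-> _ _]]]]]].
  move=> /Hm[s' [l' [a' [b' [z' [-> _ _]]]]]].
  rewrite /g /= => -[e1 ->]; congr (_, _).
  by move: (congr1 val e1); rewrite !val_insubd !size_win eqxx.
move=> x /mapP[p /Hm[s [l [a [b [z [-> H _]]]]]] ->].
have [F1 F2 _ _ [F5 _ F7 _]] := AE_facts H.
rewrite mem_enum inE /g /= val_insubd size_win eqxx F5 F2 F7 andbT.
rewrite F1 andbT.
rewrite andbT; apply: (Hfac _ a) => //.
by rewrite -size_eq0 size_win -lt0n.
Qed.

Lemma keysR_bound zs : (forall z, z \in zs -> exit_word L w q z) ->
  size (undup (map (keyR x0 w) zs)) <= K.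
Proof.
have [q0 qn Ew Lq] := mvs_facts x0 Hmin.
move=> Hz.
have n0' : 0 < size w by lia.
have Hinj : forall (y : seq A) a y' a', size y = size y' -> rcons y a = rcons y' a' -> y = y' /\ a = a'.
  by move=> y a y' a' _ /rcons_inj[-> ->].
have Hsurj : forall t : seq A, size t = (size w).+1 -> exists y a, t = rcons y a.
  by move=> t; case/lastP: t => [//|y a] _; exists y, a.
have Hfac : forall (y : seq A) a, y != [::] -> L (rcons y a) -> L y.
  move=> y a yn La; apply: (factor_prefix (t := [:: a]) HL) => //.
  by rewrite cats1.
have Hex : forall y, L y -> exists a, L (rcons y a) by case: HL => _ _ _ _ H.
have KC := @key_card A L (fun y a => rcons y a) (size w) K (nseq_tuple (size w).+1 x0)
  (fun y a => size_rcons y a) Hinj Hsurj n0' Hfac Hex Hgr (fun y => nth x0 y (size w - q)).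
apply: leq_trans KC.
pose g (p : seq A * A) : (size w).-tuple A * A := (insubd (nseq_tuple (size w) x0) p.1, p.2).
have Hm : forall p, p \in undup (map (keyR x0 w) zs) ->
    exists s l a b z, [/\ p = (win (s + (l - size w)) (size w), b), AE z s l a b & z \in zs].
  move=> p; rewrite mem_undup => /mapP[z zin ->].
  have [s [l [a [b H]]]] := exit_AE (Hz _ zin).
  by exists s, l, a, b, z; rewrite (keyR_AE Hn0 H).
rewrite -(size_map g) cardE; apply: uniq_leq_size.
  rewrite map_inj_in_uniq ?undup_uniq // => p p' /Hm[s [l [a [b [z [-> _ _]]]]]].
  move=> /Hm[s' [l' [a' [b' [z' [-> _ _]]]]]].
  rewrite /g /= => -[e1 ->]; congr (_, _).
  by move: (congr1 val e1); rewrite !val_insubd !size_win eqxx.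
move=> x /mapP[p /Hm[s [l [a [b [z [-> H _]]]]]] ->].
have [_ _ F3 F4 [_ F6 _ F8]] := AE_facts H.
rewrite mem_enum inE /g /= val_insubd size_win eqxx F6 F4 F8 F3 andbT.
rewrite andbT; apply: (Hfac _ b) => //.
by rewrite -size_eq0 size_win -lt0n.
Qed.

Lemma final_bound zs : uniq zs -> (forall z, z \in zs -> exit_word L w q z) ->
  size zs <= 2 * K ^ 2.
Proof.
move=> uz Hz.
have H1 := @size_le_fibers _ _ (fun z => (keyL x0 w z, keyR x0 w z)) 2 zs (fiber_count uz Hz).
apply: leq_trans H1 _; rewrite leq_mul2l /= expnS expn1.
apply: leq_trans (leq_mul (keysL_bound Hz) (keysR_bound Hz)).
rewrite -(size_allpairs pair); apply: uniq_leq_size; first exact: undup_uniq.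
move=> k; rewrite mem_undup => /mapP[z zin ->].
by apply: allpairs_f; rewrite mem_undup map_f.
Qed.

End Final.

Theorem mainTheorem16 (A : finType) (L : seq A -> bool) (K : nat) :
  is_language L -> RBC L -> growth_constant L K ->
  exists N, forall w : seq A, L w -> N <= size w ->
    (exists q, valid_step L w q) ->
    forall q, min_valid_step L w q ->
    forall zs : seq (seq A), uniq zs ->
      (forall z, z \in zs -> exit_word L w q z) ->
      size zs <= 2 * K ^ 2.
Proof.
move=> HL [n0 HR] [n1 Hg]; exists (n0 + n1) => w Lw Nw _ q Hmin zs uz Hz.
have [x0 _] : exists x0 : A, True.
  by case: Hmin => [[h _ _ _ _] _]; case: (w) h => // x; exists x.
apply: (@final_bound A L x0 w q n0 K HL Hmin HR) => //.
  by apply: leq_trans Nw; rewrite leq_addr.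
by apply: Hg; apply: leq_trans Nw; rewrite leq_addl.
Qed.
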